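(* Let $0<p_{\mathrm{gen}}<1$, $0<p_{\mathrm{swap}}\le1$. Let $T_0$ be either geometric on $\{1,2,\dots\}$ with parameter $p_{\mathrm{gen}}$ or exponential with $\Pr(T_0>x)=e^{-p_{\mathrm{gen}}x}$. For $n\ge0$ let $M_n=\max(T_n^{(1)},T_n^{(2)})$ (i.i.d. copies of $T_n$) and $T_{n+1}=\sum_{k=1}^{K}M_n^{(k)}$ with $M_n^{(k)}$ i.i.d. copies of $M_n$ and $K$ independent, geometric on $\{1,2,\dots\}$ with parameter $p_{\mathrm{swap}}$. Define $R_0=\max(T_0^{(1)},T_0^{(2)})$ and $R_{n+1}=\sum_{j=1}^{N}R_n^{(j)}$ with $R_n^{(j)}$ i.i.d. copies of $R_n$ and $N=\max(K^{(1)},K^{(2)})$ independent, $K^{(1)},K^{(2)}$ i.i.d. geometric on $\{1,2,\dots\}$ with parameter $p_{\mathrm{swap}}$. Then $M_n\ge_{\mathrm{st}}R_n$ for all $n\ge0$.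
   Context: A geometric random variable on $\{1,2,\dots\}$ with parameter $q$ satisfies $\Pr(K=k)=q(1-q)^{k-1}$. For random variables $X,Y$ with domains $D_X,D_Y\subseteq\mathbb{R}$, $X\ge_{\mathrm{st}}Y$ means $\Pr(X>z)\ge\Pr(Y>z)$ for all $z\in D_X\cap D_Y$. *)

(* Defs.v *)
From HB Require Import structures.
From mathcomp Require Import all_boot all_order all_algebra.
From mathcomp Require Import all_classical all_reals all_analysis.

Set Implicit Arguments.
Unset Strict Implicit.
Unset Printing Implicit Defensive.

Import Order.TTheory GRing.Theory Num.Theory.
Local Open Scope classical_set_scope.
Local Open Scope ring_scope.

Definition mutual_indep d (T : measurableType d) (R : realType)
    (P : probability T R) (I : eqType) (X : I -> T -> R) : Prop :=
  (forall i, measurable_fun setT (X i)) /\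
  forall (J : seq I) (A : I -> set R), uniq J -> (forall i, measurable (A i)) ->
    P [set w | forall i, i \in J -> A i (X i w)]
    = (\prod_(i <- J) P (X i @^-1` A i))%E.

Definition same_law d (T : measurableType d) (R : realType)
    (P : probability T R) (X Y : T -> R) : Prop :=
  forall A : set R, measurable A -> P (X @^-1` A) = P (Y @^-1` A).

Definition geometric_rv d (T : measurableType d) (R : realType)
    (P : probability T R) (q : R) (K : T -> nat) : Prop :=
  forall k : nat, (0 < k)%N -> P (K @^-1` [set k]) = (q * (1 - q) ^+ k.-1)%:E.

Definition geometric_real d (T : measurableType d) (R : realType)
    (P : probability T R) (q : R) (X : T -> R) : Prop :=
  forall k : nat, (0 < k)%N ->
    P (X @^-1` [set k%:R]) = (q * (1 - q) ^+ k.-1)%:E.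

Definition exponential_real d (T : measurableType d) (R : realType)
    (P : probability T R) (q : R) (X : T -> R) : Prop :=
  forall x : R, 0 <= x -> P [set w | x < X w] = (expR (- (q * x)))%:E.

Definition is_max2_law d (T : measurableType d) (R : realType)
    (P : probability T R) (X Y : T -> R) : Prop :=
  exists X12 : bool -> T -> R,
    mutual_indep P X12 /\ (forall b, same_law P (X12 b) X) /\
    same_law P Y (fun w => Num.max (X12 true w) (X12 false w)).

Definition is_geom_sum_law d (T : measurableType d) (R : realType)
    (P : probability T R) (q : R) (X Y : T -> R) : Prop :=
  exists (K : T -> nat) (Xs : nat -> T -> R),
    mutual_indep P (fun i : option nat =>
      match i with None => fun w => (K w)%:R | Some k => Xs k end) /\
    geometric_rv P q K /\ (forall k, same_law P (Xs k) X) /\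
    same_law P Y (fun w => \sum_(k < K w) Xs k w).

Definition is_maxgeom_sum_law d (T : measurableType d) (R : realType)
    (P : probability T R) (q : R) (X Y : T -> R) : Prop :=
  exists (K : bool -> T -> nat) (Xs : nat -> T -> R),
    mutual_indep P (fun i : bool + nat =>
      match i with inl b => fun w => (K b w)%:R | inr j => Xs j end) /\
    (forall b, geometric_rv P q (K b)) /\ (forall j, same_law P (Xs j) X) /\
    same_law P Y (fun w => \sum_(j < maxn (K true w) (K false w)) Xs j w).

(* Main.v *)
Require Import Defs.
From HB Require Import structures.
From mathcomp Require Import all_boot all_order all_algebra.
From mathcomp Require Import all_classical all_reals all_analysis.
From mathcomp Require Import ring lra.

Import Order.TTheory GRing.Theory Num.Theory.
Local Open Scope classical_set_scope.
Local Open Scope ring_scope.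



Section Indep.
Context {d : measure_display} {T : measurableType d} {R : realType} {P : probability T R}.
Local Open Scope ereal_scope.

Lemma prob_finE {A : set T} : measurable A -> P A = (fine (P A))%:E.
Proof.
move=> mA; rewrite fineK // ge0_fin_numE //.
by rewrite (le_lt_trans (probability_le1 _ mA)) // ltey.
Qed.

Definition dyn_class (B : set T) : set (set T) :=
  [set E | measurable E /\ P (E `&` B) = P E * P B].

Lemma dyn_class_dynkin B : measurable B -> dynkin (dyn_class B).
Proof.
move=> mB; split.
- by split => //; rewrite setTI probability_setT mul1e.
- move=> E [mE hE]; split; first exact: measurableC.
  rewrite probability_setC //.
  have -> : ~` E `&` B = B `\` E by rewrite setDE setIC.
  rewrite measureD //; last by rewrite (le_lt_trans (probability_le1 _ mB)) // ltey.
  change (P B - P (B `&` E) = (1 - P E) * P B).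
  rewrite (setIC B E) hE (prob_finE mE) (prob_finE mB).
  rewrite -EFinM -EFinB -EFinB -EFinM.
  by congr (_%:E); ring.
- move=> F tF hF; split.
    by apply: bigcup_measurable => k _; case: (hF k).
  rewrite setI_bigcupl measure_semi_bigcup; first last.
  + by apply: bigcup_measurable => k _; apply: measurableI => //; case: (hF k).
  + apply/trivIsetP => i j _ _ ij; rewrite setIACA setIid.
    by move/trivIsetP : tF => /(_ i j I I ij) ->; rewrite set0I.
  + by move=> k; apply: measurableI => //; case: (hF k).
  rewrite measure_semi_bigcup; first last.
  + by apply: bigcup_measurable => k _; case: (hF k).
  + exact: tF.
  + by move=> k; case: (hF k).
  rewrite (prob_finE mB) muleC -nneseriesZl //.
  apply: eq_eseriesr => k _; have [mk hk] := hF k.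
  by rewrite muleC -prob_finE //; exact: hk.
Qed.

Lemma sigma_sub_dyn (G H : set (set T)) :
  setI_closed G -> dynkin H -> G `<=` H -> <<s G >> `<=` H.
Proof.
move=> GI dH GH; rewrite -setI_closed_g_dynkin_g_sigma_algebra //.
exact: smallest_sub.
Qed.


Section Family.
Context {I : eqType} {X : I -> T -> R} (hX : mutual_indep P X).

Definition GJ (J : seq I) : set (set T) :=
  [set E | exists A : I -> set R, (forall i, measurable (A i)) /\
     E = [set w | forall i, i \in J -> A i (X i w)]].

Lemma meas_forall (J : seq I) (A : I -> set R) : (forall i, measurable (A i)) ->
  measurable [set w | forall i, i \in J -> A i (X i w)].
Proof.
move=> mA; elim: J => [|j J IH].
  by rewrite (_ : [set w | _] = setT) //; apply/seteqP; split => // w _ i.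
rewrite (_ : [set w | _] = (setT `&` X j @^-1` A j) `&` [set w | forall i, i \in J -> A i (X i w)]).
  by apply: measurableI => //; apply: (hX.1 j) => //.
apply/seteqP; split => w /=.
  by move=> h; split; [split => //; apply: h; rewrite inE eqxx|move=> i iJ; apply: h; rewrite inE iJ orbT].
by move=> [[_ hj] hJ] i; rewrite inE => /orP[/eqP->|/hJ].
Qed.

Lemma GJ_meas (J : seq I) : GJ J `<=` measurable.
Proof. by move=> E [A [mA ->]]; exact: meas_forall. Qed.

Lemma GJ_setI (J : seq I) : setI_closed (GJ J).
Proof.
move=> E F [A [mA ->]] [B [mB ->]]; exists (fun i => A i `&` B i); split.
  by move=> i; apply: measurableI.
by apply/seteqP; split => w /=; [move=> [h1 h2] i iJ; split; [exact: h1|exact: h2]|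
  move=> h; split => i iJ; have [] := h i iJ].
Qed.

Lemma indep_GJ (J1 J2 : seq I) : uniq (J1 ++ J2) ->
  forall E F, GJ J1 E -> GJ J2 F -> P (E `&` F) = P E * P F.
Proof.
move=> u E F [A [mA ->]] [B [mB ->]].
pose C i := if i \in J1 then A i else B i.
have mC i : measurable (C i) by rewrite /C; case: ifP.
rewrite (_ : _ `&` _ = [set w | forall i, i \in J1 ++ J2 -> C i (X i w)]); last first.
  apply/seteqP; split => w /=.
    move=> [h1 h2] i; rewrite mem_cat /C => /orP[iJ|iJ]; first by rewrite iJ; exact: h1.
    case: ifP => [iJ1|_]; last exact: h2.
    by move: u; rewrite cat_uniq => /and3P[_ /hasPn /(_ i iJ) /negP]; rewrite iJ1.
  move=> h; split => i iJ.
    by have := h i; rewrite mem_cat iJ /C iJ; apply.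
  have := h i; rewrite mem_cat iJ orbT /C; case: ifP => [iJ1|_]; last by apply.
  by move: u; rewrite cat_uniq => /and3P[_ /hasPn /(_ i iJ) /negP]; rewrite iJ1.
have u1 : uniq J1 by move: u; rewrite cat_uniq => /and3P[].
have u2 : uniq J2 by move: u; rewrite cat_uniq => /and3P[].
have -> : P [set w | forall i, i \in J1 ++ J2 -> C i (X i w)] =
   \prod_(i <- J1 ++ J2) P (X i @^-1` C i) by exact: hX.2 _ _ u mC.
have -> : P [set w | forall i, i \in J1 -> A i (X i w)] =
   \prod_(i <- J1) P (X i @^-1` A i) by exact: hX.2 _ _ u1 mA.
have -> : P [set w | forall i, i \in J2 -> B i (X i w)] =
   \prod_(i <- J2) P (X i @^-1` B i) by exact: hX.2 _ _ u2 mB.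
rewrite big_cat /=; congr (_ * _); apply: eq_big_seq => i iJ; rewrite /C.
  by rewrite iJ.
by case: ifP => // iJ1; move: u; rewrite cat_uniq => /and3P[_ /hasPn /(_ i iJ) /negP]; rewrite iJ1.
Qed.

Lemma sigma_GJ_meas (J : seq I) : <<s GJ J >> `<=` measurable.
Proof.
apply: smallest_sub; last exact: GJ_meas.
exact: sigma_algebra_measurable.
Qed.

Lemma indep_sigma (J1 J2 : seq I) : uniq (J1 ++ J2) ->
  forall E F, <<s GJ J1 >> E -> <<s GJ J2 >> F -> P (E `&` F) = P E * P F.
Proof.
move=> u.
have step1 F : GJ J2 F -> <<s GJ J1 >> `<=` dyn_class F.
  move=> hF; apply: sigma_sub_dyn; [exact: GJ_setI|apply: dyn_class_dynkin; exact: (@GJ_meas J2 F hF)|].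
  by move=> E hE; split; [exact: (@GJ_meas J1 E hE)|exact (@indep_GJ J1 J2 u E F hE hF)].
move=> E F hE hF.
have : <<s GJ J2 >> `<=` dyn_class E.
  apply: sigma_sub_dyn; [exact: GJ_setI|apply: dyn_class_dynkin; exact: (@sigma_GJ_meas J1 E hE)|].
  move=> G hG; split; first exact: (@GJ_meas J2 G hG).
  have [_ h] := step1 G hG E hE; rewrite setIC muleC; exact h.
move=> /(_ F hF) [_ h]; rewrite setIC muleC; exact h.
Qed.


Lemma Xi_gmeas (J : seq I) i : i \in J ->
  measurable_fun [set: g_sigma_algebraType (GJ J)] (X i).
Proof.
move=> iJ _ B mB; rewrite setTI; apply: sub_sigma_algebra.
exists (fun k => if k == i then B else setT); split.
  by move=> k; case: ifP.
apply/seteqP; split => w /=.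
  by move=> h k _; case: ifP => // /eqP ->.
by move=> /(_ i iJ); rewrite eqxx.
Qed.

Definition Ssum (e : nat -> I) (m : nat) (w : T) : R := (\sum_(k < m) X (e k) w)%R.

Lemma Ssum_S e m w : Ssum e m.+1 w = (Ssum e m w + X (e m) w)%R.
Proof. by rewrite /Ssum big_ord_recr. Qed.

Lemma Ssum_gmeas (J : seq I) e m : (forall k, (k < m)%N -> e k \in J) ->
  measurable_fun [set: g_sigma_algebraType (GJ J)] (Ssum e m).
Proof.
elim: m => [|m IH] h.
  rewrite (_ : Ssum e 0 = cst 0%R); first exact: measurable_cst.
  by apply/funext => w; rewrite /Ssum big_ord0.
rewrite (_ : Ssum e m.+1 = (Ssum e m \+ X (e m))%R); last first.
  by apply/funext => w; rewrite Ssum_S.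
apply: measurable_realfun.measurable_funD.
  by apply: IH => k km; apply: h; rewrite ltnS ltnW.
by apply: Xi_gmeas; apply: h.
Qed.

Lemma Ssum_meas e m : measurable_fun setT (Ssum e m).
Proof.
elim: m => [|m IH].
  rewrite (_ : Ssum e 0 = cst 0%R); first exact: measurable_cst.
  by apply/funext => w; rewrite /Ssum big_ord0.
rewrite (_ : Ssum e m.+1 = (Ssum e m \+ X (e m))%R); last first.
  by apply/funext => w; rewrite Ssum_S.
by apply: measurable_realfun.measurable_funD => //; exact: hX.1.
Qed.

Lemma gmeas_sigma (J : seq I) (f : T -> R) :
  measurable_fun [set: g_sigma_algebraType (GJ J)] f ->
  forall B, measurable B -> <<s GJ J >> (f @^-1` B).
Proof. by move=> mf B mB; have := mf measurableT B mB; rewrite setTI. Qed.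

Lemma Ssum_indep e m : injective e -> forall A B, measurable A -> measurable B ->
  P (Ssum e m @^-1` A `&` X (e m) @^-1` B) =
  P (Ssum e m @^-1` A) * P (X (e m) @^-1` B).
Proof.
move=> ie A B mA mB.
have u : uniq (map e (iota 0 m) ++ [:: e m]).
  rewrite cat_uniq (map_inj_uniq ie) iota_uniq /= andbT orbF.
  by apply/mapP => -[k]; rewrite mem_iota add0n => /andP[_ km] /ie kE; move: km; rewrite kE ltnn.
have h1 : <<s GJ (map e (iota 0 m)) >> (Ssum e m @^-1` A).
  apply: gmeas_sigma => //; apply: Ssum_gmeas => k km.
  by apply: map_f; rewrite mem_iota add0n km.
have h2 : <<s GJ [:: e m] >> (X (e m) @^-1` B).
  by apply: gmeas_sigma => //; apply: Xi_gmeas; rewrite inE.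
exact (@indep_sigma _ _ u _ _ h1 h2).
Qed.

End Family.
End Indep.
Arguments Ssum {d T R I} X e m w.
Arguments GJ {d T R I} X J.



Section Conv.
Context (R : realType).
Local Open Scope ereal_scope.

Definition convD (z : R) : set (R * R) := [set p | (p.1 + p.2 <= z)%R].

Lemma convD_meas z : measurable (convD z).
Proof.
rewrite (_ : convD z = (fun p : R * R => p.1 + p.2)%R @^-1` `]-oo, z]).
  have mf : measurable_fun setT (fun p : R * R => p.1 + p.2)%R.
    apply: (measurable_realfun.measurable_funD (f:=fst) (g:=snd)).
      exact: measurable_fst.
    exact: measurable_snd.
  rewrite -[X in measurable X]setTI; apply: mf => //; exact: measurable_itv.
by apply/seteqP; split => p /=; rewrite in_itv.
Qed.

Definition conv (mu nu : probability R R) z := (mu \x nu) (convD z).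

Lemma conv_E (mu nu : probability R R) z :
  conv mu nu z = \int[mu]_u nu `]-oo, (z - u)%R]%classic.
Proof.
rewrite /conv /product_measure1; apply: eq_integral => u _ /=.
congr (nu _); apply/seteqP; split => v /=; rewrite /xsection /= inE /convD /= in_itv /= => h; lra.
Qed.

Lemma conv_sym (mu nu : probability R R) z : conv mu nu z = conv nu mu z.
Proof.
rewrite /conv (product_measure_unique (m' := mu \x^ nu)); last 2 first.
- by move=> A B mA mB; exact (@product_measure2E _ _ _ _ _ mu nu A B mA mB).
- exact: convD_meas.
rewrite /product_measure2 /product_measure1; apply: eq_integral => v _ /=.
congr (mu _); apply/seteqP; split => u /=; rewrite /xsection /ysection /= !inE /convD /= => h; lra.
Qed.

Lemma conv_le (mu nu nu' : probability R R) z :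
  (forall t, nu `]-oo, t]%classic <= nu' `]-oo, t]%classic) -> conv mu nu z <= conv mu nu' z.
Proof.
move=> h; rewrite /conv /product_measure1; apply: ge0_le_integral => //.
- exact: measurable_fun_xsection (convD_meas z).
- exact: measurable_fun_xsection (convD_meas z).
move=> u _ /=.
have E (m : probability R R) : m (xsection (convD z) u) = m `]-oo, (z - u)%R]%classic.
  congr (m _); apply/seteqP; split => v /=; rewrite /xsection /= inE /convD /= in_itv /= => h'; lra.
by rewrite !E.
Qed.

End Conv.
Arguments conv {R}.
Arguments convD {R}.



Section Law.
Context {d : measure_display} {T : measurableType d} {R : realType} (P : probability T R).
Local Open Scope ereal_scope.

Definition law {U : T -> R} (mU : measurable_fun setT U) : probability R R :=
  distribution P (mfun_Sub (mem_set mU : U \in mfun)).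

Lemma lawE U mU A : @law U mU A = P (U @^-1` A).
Proof. by []. Qed.

Lemma law_sum (U V : T -> R) (mU : measurable_fun setT U) (mV : measurable_fun setT V) :
  (forall A B, measurable A -> measurable B ->
     P (U @^-1` A `&` V @^-1` B) = P (U @^-1` A) * P (V @^-1` B)) ->
  forall z, P [set w | (U w + V w <= z)%R] = conv (law mU) (law mV) z.
Proof.
move=> hind z.
have mW : measurable_fun setT (fun w => (U w, V w)) by exact: measurable_fun_pair.
pose Q := distribution P (mfun_Sub (mem_set mW : (fun w => (U w, V w)) \in mfun)).
rewrite /conv (product_measure_unique (m' := Q)); last 2 first.
- by move=> A B mA mB; exact (hind A B mA mB).
- exact: convD_meas.
reflexivity.
Qed.


Lemma preim_itv (U : T -> R) t : U @^-1` `]-oo, t]%classic = [set w | (U w <= t)%R].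
Proof. by apply/seteqP; split => w /=; rewrite in_itv. Qed.

Lemma law_itv (U : T -> R) (mU : measurable_fun setT U) t :
  law mU `]-oo, t]%classic = P [set w | (U w <= t)%R].
Proof. by rewrite lawE preim_itv. Qed.

Lemma sum_mono (I I' : eqType) (X : I -> T -> R) (Y : I' -> T -> R)
  (hX : mutual_indep P X) (hY : mutual_indep P Y) (e : nat -> I) (e' : nat -> I')
  (ie : injective e) (ie' : injective e') :
  (forall k t, P [set w | (X (e k) w <= t)%R] <= P [set w | (Y (e' k) w <= t)%R]) ->
  forall m t, P [set w | (Ssum X e m w <= t)%R] <= P [set w | (Ssum Y e' m w <= t)%R].
Proof.
move=> hle; elim=> [|m IH] t.
  by rewrite /Ssum (_ : [set w | _] = [set w | (0 <= t)%R]);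
    [rewrite (_ : [set w | (\sum_(k < 0) Y (e' k) w <= t)%R] = [set w | (0 <= t)%R]) //|];
    apply/seteqP; split => w /=; rewrite big_ord0.
have mS := Ssum_meas hX e m.
have mS' := Ssum_meas hY e' m.
have mXm := hX.1 (e m).
have mYm := hY.1 (e' m).
have E1 : [set w | (Ssum X e m.+1 w <= t)%R] = [set w | (Ssum X e m w + X (e m) w <= t)%R].
  by apply/seteqP; split => w /=; rewrite Ssum_S.
have E2 : [set w | (Ssum Y e' m.+1 w <= t)%R] = [set w | (Ssum Y e' m w + Y (e' m) w <= t)%R].
  by apply/seteqP; split => w /=; rewrite Ssum_S.
rewrite E1 E2 (@law_sum _ _ mS mXm) ?(@law_sum _ _ mS' mYm); last 2 first.
- by move=> A B mA mB; exact: (Ssum_indep hY).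
- by move=> A B mA mB; exact: (Ssum_indep hX).
apply: (@le_trans _ _ (conv (law mS) (law mYm) t)).
  by apply: conv_le => s; rewrite !law_itv.
rewrite conv_sym [X in _ <= X]conv_sym.
by apply: conv_le => s; rewrite !law_itv.
Qed.

End Law.



Section Main.
Context {d : measure_display} {T : measurableType d} {R : realType} (P : probability T R).
Local Open Scope ereal_scope.

Lemma same_law_cdf {X Y : T -> R} : same_law P X Y ->
  forall z, P [set w | (X w <= z)%R] = P [set w | (Y w <= z)%R].
Proof.
move=> h z; rewrite -(preim_itv X) -(preim_itv Y); apply: h; exact: measurable_itv.
Qed.

Lemma itv_app (t x : R) : `]-oo, t]%classic x = (x <= t)%R.
Proof. by rewrite /= in_itv. Qed.

Lemma max2_cdf (X Y : T -> R) : is_max2_law P X Y ->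
  forall z, P [set w | (Y w <= z)%R] =
            P [set w | (X w <= z)%R] * P [set w | (X w <= z)%R].
Proof.
move=> [X12 [hi [hl hY]]] z.
rewrite (same_law_cdf hY).
have -> : [set w | (Num.max (X12 true w) (X12 false w) <= z)%R] =
   [set w | forall i, i \in [:: true; false] -> `]-oo, z]%classic (X12 i w)].
  apply/seteqP; split => w.
    move=> hw i; rewrite !inE => /orP[] /eqP ->; rewrite itv_app;
      by move: hw; rewrite /= ge_max => /andP[].
  move=> h; rewrite /= ge_max; have := h true; have := h false.
  by rewrite !inE /= eqxx !in_itv /= => h2 h1; rewrite h1 // h2.
have mI : forall i : bool, measurable (`]-oo, z]%classic : set R) by move=> i; exact: measurable_itv.
apply: (etrans (hi.2 [:: true; false] (fun _ => `]-oo, z]%classic) isT mI)).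
rewrite big_cons big_cons big_nil mule1 !preim_itv.
by rewrite (same_law_cdf (hl true)) (same_law_cdf (hl false)).
Qed.


Lemma K_meas (K : T -> nat) : measurable_fun setT (fun w => (K w)%:R : R) ->
  forall m, measurable [set w | K w = m].
Proof.
move=> mK m.
rewrite (_ : [set w | K w = m] = setT `&` (fun w => (K w)%:R : R) @^-1` [set (m%:R : R)]).
  by apply: mK => //; exact: measurable_set1.
apply/seteqP; split => w /=; first by move=> ->.
by move=> [_ /eqP]; rewrite eqr_nat => /eqP.
Qed.

Lemma geomK_eq (q : R) (K K' : T -> nat) :
  measurable_fun setT (fun w => (K w)%:R : R) ->
  measurable_fun setT (fun w => (K' w)%:R : R) ->
  geometric_rv P q K -> geometric_rv P q K' ->
  forall m, P [set w | K w = m] = P [set w | K' w = m].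
Proof.
move=> mK mK' gK gK' m.
have pos k : (0 < k)%N -> P [set w | K w = k] = P [set w | K' w = k].
  by move=> k0; transitivity ((q * (1 - q) ^+ k.-1)%:E); [exact: gK|symmetry; exact: gK'].
case: m => [|m]; last exact: pos.
pose D := [set k : nat | (0 < k)%N].
have E (L : T -> nat) : measurable_fun setT (fun w => (L w)%:R : R) ->
    P [set w | L w = 0%N] = 1 - \sum_(0 <= i <oo | i \in D) P [set w | L w = i].
  move=> mL.
  have -> : [set w | L w = 0%N] = ~` \bigcup_(k in D) [set w | L w = k].
    apply/seteqP; split => w /=.
      by move=> h [k /= k0 hk]; move: k0; rewrite -hk h.
    move=> h; apply/eqP/negP => /negP; rewrite -lt0n => h0.
    by apply: h; exists (L w).
  rewrite probability_setC; last first.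
    by apply: bigcup_measurable => k _; exact: K_meas.
  rewrite (measure_bigcup P D) //.
    by move=> k _; exact: K_meas.
  apply/trivIsetP => i j _ _ ij; apply/seteqP; split => // w [/= -> h].
  by move: ij; rewrite h eqxx.
rewrite (E K mK) (E K' mK'); congr (_ - _); apply: eq_eseriesr => k.
by rewrite inE => /pos.
Qed.


Lemma Kev_eq (K : T -> nat) m :
  [set w | K w = m] = (fun w => (K w)%:R : R) @^-1` [set (m%:R : R)].
Proof.
apply/seteqP; split => w /=; first by move=> ->.
by move/eqP; rewrite eqr_nat => /eqP.
Qed.

Lemma geom_formula (K : T -> nat) (Xs : nat -> T -> R)
  (h : mutual_indep P (fun i : option nat =>
      match i with None => fun w => (K w)%:R | Some k => Xs k end))
  (Y : T -> R) (hY : same_law P Y (fun w => (\sum_(k < K w) Xs k w)%R)) z :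
  P [set w | (Y w <= z)%R] = \sum_(m <oo)
    (P [set w | K w = m] * P [set w | (\sum_(k < m) Xs k w <= z)%R]).
Proof.
set F := (fun i : option nat => _) in h.
rewrite (same_law_cdf hY).
have mK : measurable_fun setT (fun w => (K w)%:R : R) := h.1 None.
have mS m : measurable_fun setT (Ssum F Some m) := Ssum_meas h Some m.
have mE m : measurable ([set w | K w = m] `&` [set w | (Ssum F Some m w <= z)%R]).
  apply: measurableI; first exact: K_meas.
  by rewrite -(preim_itv (Ssum F Some m)) -[X in measurable X]setTI; apply: mS => //;
    exact: measurable_itv.
have -> : [set w | (\sum_(k < K w) Xs k w <= z)%R] =
    \bigcup_m ([set w | K w = m] `&` [set w | (Ssum F Some m w <= z)%R]).
  apply/seteqP; split => w /=; first by move=> hz; exists (K w).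
  by move=> [m _ [/= hm hz]]; rewrite hm.
rewrite measure_semi_bigcup //; last first.
- by apply: bigcup_measurable => m _.
- apply/trivIsetP => i j _ _ ij; apply/seteqP; split => // w [[/= hi _] [hj _]].
  by move: ij; rewrite -hi -hj eqxx.
apply: eq_eseriesr => m _.
have u : uniq ([:: None] ++ map Some (iota 0 m)).
  by rewrite /= (map_inj_uniq (@Some_inj _)) iota_uniq andbT; apply/mapP => -[].
have h1 : <<s GJ F [:: None] >> [set w | K w = m].
  rewrite Kev_eq.
  exact: (@gmeas_sigma _ _ _ _ F [:: None] (F None)
    (@Xi_gmeas _ _ _ _ F [:: None] None (mem_head _ _)) _ (measurable_set1 (m%:R : R))).
have h2 : <<s GJ F (map Some (iota 0 m)) >> [set w | (Ssum F Some m w <= z)%R].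
  rewrite -(preim_itv (Ssum F Some m)).
  apply: (@gmeas_sigma _ _ _ _ F _ (Ssum F Some m)); last exact: measurable_itv.
  by apply: Ssum_gmeas => k km; apply: map_f; rewrite mem_iota.
exact (indep_sigma h _ _ u _ _ h1 h2).
Qed.


Lemma maxgeom_formula (K : bool -> T -> nat) (Xs : nat -> T -> R)
  (h : mutual_indep P (fun i : bool + nat =>
      match i with inl b => fun w => (K b w)%:R | inr j => Xs j end))
  (Y : T -> R)
  (hY : same_law P Y (fun w => (\sum_(j < maxn (K true w) (K false w)) Xs j w)%R)) z :
  P [set w | (Y w <= z)%R] = \sum_(a <oo) \sum_(b <oo)
    (P [set w | K true w = a] * P [set w | K false w = b] *
     P [set w | (\sum_(k < maxn a b) Xs k w <= z)%R]).
Proof.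
set F := (fun i : bool + nat => _) in h.
rewrite (same_law_cdf hY).
pose A (a b : nat) (i : bool + nat) : set R :=
  match i with inl true => [set (a%:R : R)] | inl false => [set (b%:R : R)] | inr _ => setT end.
have mA a b i : measurable (A a b i).
  by case: i => [[]|_] /=; [exact: measurable_set1|exact: measurable_set1|].
pose J1 := [:: inl true; inl false] : seq (bool + nat).
pose Kab a b := [set w | forall i, i \in J1 -> A a b i (F i w)].
have KabE a b : Kab a b = [set w | K true w = a] `&` [set w | K false w = b].
  apply/seteqP; split => w /=.
    move=> hw; have := hw (inl true); have := hw (inl false).
    rewrite /J1 !inE /= => /(_ isT) /eqP; rewrite eqr_nat => /eqP ->.
    by move=> /(_ isT) /eqP; rewrite eqr_nat => /eqP ->.
  by move=> [ha hb] [[]|j]; rewrite /J1 !inE //= => _; [rewrite ha|rewrite hb].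
have mS m : measurable_fun setT (Ssum F inr m) := Ssum_meas h inr m.
have mSz m : measurable [set w | (Ssum F inr m w <= z)%R].
  by rewrite -(preim_itv (Ssum F inr m)) -[X in measurable X]setTI; apply: mS => //;
    exact: measurable_itv.
have mKab a b : measurable (Kab a b) by apply: meas_forall h _ _ (mA a b).
have mE a b : measurable (Kab a b `&` [set w | (Ssum F inr (maxn a b) w <= z)%R]).
  exact: measurableI.
have mAa a : measurable (\bigcup_b (Kab a b `&` [set w | (Ssum F inr (maxn a b) w <= z)%R])).
  by apply: bigcup_measurable => b _.
have -> : [set w | (\sum_(j < maxn (K true w) (K false w)) Xs j w <= z)%R] =
    \bigcup_a \bigcup_b (Kab a b `&` [set w | (Ssum F inr (maxn a b) w <= z)%R]).
  apply/seteqP; split => w /=.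
    move=> hz; exists (K true w) => //; exists (K false w) => //; split => //.
    by rewrite KabE.
  by move=> [a _ [b _ [+ /= hz]]]; rewrite KabE => -[/= -> ->].
rewrite measure_semi_bigcup //; last first.
- by apply: bigcup_measurable => a _.
- apply/trivIsetP => i j _ _ ij; apply/seteqP; split => // w [[b1 _ [+ _]] [b2 _ [+ _]]].
  by rewrite !KabE => -[/= hi _] [/= hj _]; move: ij; rewrite -hi -hj eqxx.
apply: eq_eseriesr => a _.
rewrite measure_semi_bigcup //; last first.
- apply/trivIsetP => i j _ _ ij; apply/seteqP; split => // w [[+ _] [+ _]].
  by rewrite !KabE => -[_ /= hi] [_ /= hj]; move: ij; rewrite -hi -hj eqxx.
apply: eq_eseriesr => b _.
have u : uniq (J1 ++ map inr (iota 0 (maxn a b))).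
  rewrite /J1 /= (map_inj_uniq (@inr_inj _ _)) iota_uniq andbT.
  by rewrite !inE /=; apply/andP; split; apply/mapP => -[].
have h1 : <<s GJ F J1 >> (Kab a b).
  by apply: sub_sigma_algebra; exists (A a b).
have h2 : <<s GJ F (map inr (iota 0 (maxn a b))) >> [set w | (Ssum F inr (maxn a b) w <= z)%R].
  rewrite -(preim_itv (Ssum F inr (maxn a b))).
  apply: (@gmeas_sigma _ _ _ _ F _ (Ssum F inr (maxn a b))); last exact: measurable_itv.
  by apply: Ssum_gmeas => k km; apply: map_f; rewrite mem_iota.
apply: (etrans (indep_sigma h _ _ u _ _ h1 h2)).
congr (_ * _).
apply: (etrans (h.2 J1 (A a b) isT (mA a b))).
rewrite /J1 big_cons big_cons big_nil mule1 !Kev_eq.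
by [].
Qed.

End Main.



Section Final.
Context {R : realType}.
Local Open Scope ereal_scope.

Lemma final_ineq (p G H : nat -> R) :
  (forall m, 0 <= p m)%R -> (forall m, 0 <= G m <= 1)%R -> (forall m, G m <= H m)%R ->
  (\sum_(a <oo) (p a * G a)%:E) \is a fin_num ->
  (\sum_(a <oo) (p a * G a)%:E) * (\sum_(a <oo) (p a * G a)%:E) <=
    \sum_(a <oo) \sum_(b <oo) (p a * p b * H (maxn a b))%:E.
Proof.
move=> p0 G01 GH fS.
have x0 a : (0 <= p a * G a)%R by apply: mulr_ge0 => //; case/andP: (G01 a).
set S := \sum_(a <oo) _.
rewrite -{1}(fineK fS) -nneseriesZl; last by move=> i _; rewrite lee_fin.
apply: lee_nneseries => [a _ _|a _].
  by rewrite -EFinM lee_fin mulr_ge0 // fine_ge0 // nneseries_ge0 // => i _; rewrite lee_fin.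
rewrite (fineK fS) /S muleC.
rewrite -nneseriesZl; last by move=> i _; rewrite lee_fin.
apply: lee_nneseries => [b _ _|b _].
  by rewrite -EFinM lee_fin mulr_ge0.
rewrite -EFinM lee_fin.
have [/andP[Ga0 Ga1] /andP[Gb0 Gb1]] := (G01 a, G01 b).
have GGm : (G b * G a <= G (maxn a b))%R.
  case: (leqP a b) => ab.
    nra.
  nra.
have := GH (maxn a b); have := p0 a; have := p0 b; have := G01 (maxn a b).
move=> /andP[] Gm0 Gm1 pb pa GHm.
have : (0 <= p a * p b)%R by apply: mulr_ge0.
nra.
Qed.

End Final.



Arguments max2_cdf {d T R P X Y}.
Arguments geom_formula {d T R P K Xs} h {Y} hY z.
Arguments maxgeom_formula {d T R P K Xs} h {Y} hY z.
Arguments geomK_eq {d T R P q K K'}.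
Arguments same_law_cdf {d T R P X Y}.
Arguments K_meas {d T R K}.
Arguments sum_mono {d T R P I I' X Y} hX hY {e e'}.

Section Fin.
Context {d : measure_display} {T : measurableType d} {R : realType} (P : probability T R).
Local Open Scope ereal_scope.

Lemma pfin (A : set T) : measurable A -> P A = (fine (P A))%:E.
Proof.
move=> mA; rewrite fineK // ge0_fin_numE //.
by rewrite (le_lt_trans (probability_le1 _ mA)) // ltey.
Qed.

Lemma pfine01 (A : set T) : measurable A -> (0 <= fine (P A) <= 1)%R.
Proof.
move=> mA; rewrite fine_ge0 //= -lee_fin -pfin //; exact: probability_le1.
Qed.

Lemma cdf_meas (f : T -> R) : measurable_fun setT f -> forall z,
  measurable [set w | (f w <= z)%R].
Proof.
move=> mf z; rewrite -(preim_itv f) -[X in measurable X]setTI; apply: mf => //.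
Qed.

End Fin.
Arguments pfin {d T R P A}.
Arguments cdf_meas {d T R f}.
Arguments pfine01 {d T R P A}.

Theorem lemma11 (d : measure_display) (T : measurableType d) (R : realType)
    (P : probability T R) (pgen pswap : R)
    (Tn Mn Rn : nat -> T -> R) :
  0 < pgen < 1 -> 0 < pswap <= 1 ->
  (forall n, measurable_fun setT (Tn n)) ->
  (forall n, measurable_fun setT (Mn n)) ->
  (forall n, measurable_fun setT (Rn n)) ->
  (geometric_real P pgen (Tn 0%N) \/ exponential_real P pgen (Tn 0%N)) ->
  (forall n, is_max2_law P (Tn n) (Mn n)) ->
  (forall n, is_geom_sum_law P pswap (Mn n) (Tn n.+1)) ->
  is_max2_law P (Tn 0%N) (Rn 0%N) ->
  (forall n, is_maxgeom_sum_law P pswap (Rn n) (Rn n.+1)) ->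
  forall (n : nat) (z : R),
    (P [set w | (z < Rn n w)%R] <= P [set w | (z < Mn n w)%R])%E.
Proof.
move=> _ _ mT mM mR _ hM hTn hR0 hRn.
have claim : forall n z, (P [set w | (Mn n w <= z)%R] <= P [set w | (Rn n w <= z)%R])%E.
  elim => [|n IH] z.
    by rewrite (max2_cdf (hM 0%N) z) (max2_cdf hR0 z).
  have [K [Xs [hi [gK [hXs hY]]]]] := hTn n.
  have [K2 [Xs' [hi' [gK2 [hXs' hY']]]]] := hRn n.
  have mK : measurable_fun setT (fun w => (K w)%:R : R) := hi.1 None.
  have mK2 b : measurable_fun setT (fun w => (K2 b w)%:R : R) := hi'.1 (inl b).
  have mSM m : measurable [set w | (\sum_(k < m) Xs k w <= z)%R].
    exact (cdf_meas (Ssum_meas hi Some m) z).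
  have mSR m : measurable [set w | (\sum_(k < m) Xs' k w <= z)%R].
    exact (cdf_meas (Ssum_meas hi' inr m) z).
  pose p m := fine (P [set w | K w = m]).
  pose G m := fine (P [set w | (\sum_(k < m) Xs k w <= z)%R]).
  pose H m := fine (P [set w | (\sum_(k < m) Xs' k w <= z)%R]).
  have GH m : (G m <= H m)%R.
    rewrite /G /H fine_le //; first by rewrite (pfin (mSM m)).
      by rewrite (pfin (mSR m)).
    have := sum_mono hi hi' (@Some_inj _) (@inr_inj _ _) _ m z.
    apply => k t /=.
    by rewrite (same_law_cdf (hXs k)) (same_law_cdf (hXs' k)); exact: IH.
  have eqL : P [set w | (Tn n.+1 w <= z)%R] = (\sum_(a <oo) (p a * G a)%:E)%E.
    rewrite (geom_formula hi hY z); apply: eq_eseriesr => m _.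
    by rewrite (pfin (K_meas mK m)) (pfin (mSM m)) -EFinM.
  have eqR : P [set w | (Rn n.+1 w <= z)%R] =
      (\sum_(a <oo) \sum_(b <oo) (p a * p b * H (maxn a b))%:E)%E.
    rewrite (maxgeom_formula hi' hY' z); apply: eq_eseriesr => a _; apply: eq_eseriesr => b _.
    rewrite (geomK_eq (mK2 true) mK (gK2 true) gK a) (geomK_eq (mK2 false) mK (gK2 false) gK b).
    by rewrite (pfin (K_meas mK a)) (pfin (K_meas mK b)) (pfin (mSR _)) -!EFinM.
  rewrite (max2_cdf (hM n.+1) z) eqL eqR; apply: final_ineq.
  - by move=> m; rewrite /p fine_ge0.
  - by move=> m; exact: pfine01.
  - exact: GH.
  - by rewrite -eqL (pfin (cdf_meas (mT n.+1) z)).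
move=> n z.
have E (f : T -> R) : [set w | (z < f w)%R] = ~` [set w | (f w <= z)%R].
  by apply/seteqP; split => w /=; rewrite ltNge => /negP.
rewrite !E !probability_setC; [|exact: cdf_meas|exact: cdf_meas].
rewrite (pfin (cdf_meas (mM n) z)) (pfin (cdf_meas (mR n) z)) -!EFinB lee_fin.
have := claim n z.
rewrite (pfin (cdf_meas (mM n) z)) (pfin (cdf_meas (mR n) z)) lee_fin.
lra.
Qed.
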